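(* Assume (A2), (A3), that $\phi'>0$ on $\mathbb R_{++}$ (so $\phi^{-1}$ is continuously differentiable with positive derivative), and that $V$ is irreducible. Let $q\in\partial\mathcal F$ and $u(q)=\big((\phi^{-1})'(q_1)/\phi^{-1}(q_1),\dots,(\phi^{-1})'(q_K)/\phi^{-1}(q_K)\big)>0$. Let $n_0\in\mathcal N$ be any index with $\lambda_{n_0}(q)=\max_{n\in\mathcal N}\lambda_n(q)$, where $\lambda_n(q)=\rho(G(q)B^{(n)})$, and let $y,x\in\mathbb R_{++}^K$ be left and right eigenvectors of $G(q)B^{(n_0)}$ associated with $\lambda_{n_0}(q)$. If $w=c\,u(q)\circ y\circ x$ for some $c>0$, then every maximizer $p^*$ of $p\mapsto F(p,w)$ over $\mathcal P_+$ satisfies $\phi(\mathrm{SIR}_k(p^* )/\gamma_k)=q_k$ for all $k\in\mathcal K$.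
   Context: Network model: $K\ge 2$ links, $\mathcal K=\{1,\dots,K\}$. Power constraint set $\mathcal P=\{p\in\mathbb R_+^K: Cp\le\hat p\}$, where $C\in\{0,1\}^{N\times K}$ has at least one entry equal to $1$ in each column and $\hat p=(P_1,\dots,P_N)\in\mathbb R_{++}^N$; $\mathcal P_+=\mathcal P\cap\mathbb R_{++}^K$; $\mathcal N=\{1,\dots,N\}$; $c_n$ is the $n$-th row of $C$ as a column vector. Gain matrix $V\in\mathbb R_+^{K\times K}$ with zero diagonal, noise vector $z\in\mathbb R_{++}^K$, $\mathrm{SIR}_k(p)=p_k/((Vp)_k+z_k)$. SIR targets $\gamma_k>0$, $\Gamma=\mathrm{diag}(\gamma_1,\dots,\gamma_K)$. $B^{(n)}=\Gamma V+\frac1{P_n}\Gamma z c_n^T$. Assumption (A2): $\phi:\mathbb R_{++}\to\mathbb R$ is continuously differentiable and strictly increasing; $\mathcal Q=\phi(\mathbb R_{++})$. Assumption (A3): $\phi^{-1}:\mathcal Q\to\mathbb R_{++}$ is log-convex. $G(q)=\mathrm{diag}(\phi^{-1}(q_1),\dots,\phi^{-1}(q_K))$. Feasible QoS region $\mathcal F=\{q\in\mathcal Q^K:\exists p\in\mathcal P_+,\ q_k=\phi(\mathrm{SIR}_k(p)/\gamma_k)\ \forall k\}$; for $q\in\mathcal F$ the corresponding power vector is unique. $\partial\mathcal F$ is the set of $q\in\mathcal F$ whose corresponding power vector satisfies $Cp\le\hat p$ with equality in at least one component. Aggregate utility: $F(p,w)=\sum_{k\in\mathcal K}w_k\phi(\mathrm{SIR}_k(p)/\gamma_k)$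 for $w\in\mathbb R_{++}^K$; under (A2),(A3) its maximum over $\mathcal P_+$ is attained. $\circ$ denotes the entrywise product; $\rho(\cdot)$ the spectral radius. *)

(* Defs.v *)
From Stdlib Require Import Reals.
Open Scope R_scope.

(* Vectors in R^K are functions nat -> R, only indices < K matter;
   matrices are functions nat -> nat -> R.  Indices are 0-based. *)

Fixpoint rsum (n : nat) (f : nat -> R) : R :=
  match n with
  | O => 0
  | S m => rsum m f + f m
  end.

Definition SIR (K : nat) (V : nat -> nat -> R) (z : nat -> R) (p : nat -> R) (k : nat) : R :=
  p k / (rsum K (fun j => V k j * p j) + z k).

Definition in_Pplus (K N : nat) (C : nat -> nat -> R) (Pmax : nat -> R) (p : nat -> R) : Prop :=
  (forall k, (k < K)%nat -> 0 < p k) /\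
  (forall n, (n < N)%nat -> rsum K (fun k => C n k * p k) <= Pmax n).

Definition in_boundaryF (K N : nat) (C : nat -> nat -> R) (Pmax : nat -> R)
    (V : nat -> nat -> R) (z gamma : nat -> R) (phi : R -> R) (q : nat -> R) : Prop :=
  exists p : nat -> R,
    in_Pplus K N C Pmax p /\
    (forall k, (k < K)%nat -> q k = phi (SIR K V z p k / gamma k)) /\
    (exists n, (n < N)%nat /\ rsum K (fun k => C n k * p k) = Pmax n).

Definition Futil (K : nat) (V : nat -> nat -> R) (z gamma : nat -> R) (phi : R -> R)
    (p w : nat -> R) : R :=
  rsum K (fun k => w k * phi (SIR K V z p k / gamma k)).

Definition GB (phiinv : R -> R) (q : nat -> R) (gamma : nat -> R) (V : nat -> nat -> R)
    (z : nat -> R) (C : nat -> nat -> R) (Pmax : nat -> R) (n : nat) : nat -> nat -> R :=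
  fun i j => phiinv (q i) * (gamma i * (V i j + z i * C n j / Pmax n)).

(* (a + i b) is a (complex) eigenvalue of the real K x K matrix M:
   there is a nonzero complex vector vr + i vi with M (vr + i vi) = (a + i b)(vr + i vi). *)
Definition is_eigenvalue (K : nat) (M : nat -> nat -> R) (a b : R) : Prop :=
  exists vr vi : nat -> R,
    (exists j, (j < K)%nat /\ (vr j <> 0 \/ vi j <> 0)) /\
    (forall i, (i < K)%nat ->
       rsum K (fun j => M i j * vr j) = a * vr i - b * vi i /\
       rsum K (fun j => M i j * vi j) = b * vr i + a * vi i).

Definition is_spectral_radius (K : nat) (M : nat -> nat -> R) (r : R) : Prop :=
  (exists a b, is_eigenvalue K M a b /\ sqrt (a * a + b * b) = r) /\
  (forall a b, is_eigenvalue K M a b -> sqrt (a * a + b * b) <= r).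

(* path i = i_0 -> i_1 -> ... -> i_m = j in the digraph of V (edges where V > 0) *)
Fixpoint vpath (K : nat) (V : nat -> nat -> R) (i : nat) (l : list nat) (j : nat) : Prop :=
  match l with
  | nil => i = j
  | cons h t => (h < K)%nat /\ 0 < V i h /\ vpath K V h t j
  end.

(* Irreducible nonnegative matrix: its digraph is strongly connected. *)
Definition irreducible (K : nat) (V : nat -> nat -> R) : Prop :=
  forall i j, (i < K)%nat -> (j < K)%nat -> i <> j -> exists l, l <> nil /\ vpath K V i l j.

(* Main.v *)
Require Import Defs.
From Stdlib Require Import Reals.
Open Scope R_scope.
From Stdlib Require Import Lra Lia Psatz.
Lemma rsum_ext n f g : (forall k, (k < n)%nat -> f k = g k) -> rsum n f = rsum n g.
Proof. induction n; simpl; intros H; auto. rewrite IHn by (intros; apply H; lia). rewrite H by lia. reflexivity. Qed.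

Lemma rsum_plus n f g : rsum n (fun k => f k + g k) = rsum n f + rsum n g.
Proof. induction n; simpl; [lra|rewrite IHn; ring]. Qed.

Lemma rsum_scal n a f : rsum n (fun k => a * f k) = a * rsum n f.
Proof. induction n; simpl; [ring|rewrite IHn; ring]. Qed.

Lemma rsum_minus n f g : rsum n (fun k => f k - g k) = rsum n f - rsum n g.
Proof. induction n; simpl; [lra|rewrite IHn; ring]. Qed.

Lemma rsum_zero n : rsum n (fun _ => 0) = 0.
Proof. induction n; simpl; [lra|rewrite IHn; ring]. Qed.

Lemma rsum_le n f g : (forall k, (k < n)%nat -> f k <= g k) -> rsum n f <= rsum n g.
Proof. induction n; simpl; intros H; [lra|]. assert (rsum n f <= rsum n g) by (apply IHn; intros; apply H; lia). specialize (H n ltac:(lia)). lra. Qed.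

Lemma rsum_nonneg n f : (forall k, (k < n)%nat -> 0 <= f k) -> 0 <= rsum n f.
Proof. intros H. rewrite <- (rsum_zero n). apply rsum_le. auto. Qed.

Lemma rsum_pos n f : (0 < n)%nat -> (forall k, (k < n)%nat -> 0 < f k) -> 0 < rsum n f.
Proof. destruct n; [lia|]. intros _ H; simpl. assert (0 <= rsum n f) by (apply rsum_nonneg; intros; left; apply H; lia).
 specialize (H n ltac:(lia)). lra. Qed.

Lemma rsum_zero_nonneg n f : (forall k, (k < n)%nat -> 0 <= f k) -> rsum n f <= 0 -> forall k, (k < n)%nat -> f k = 0.
Proof. induction n; simpl; intros H Hs k Hk; [lia|].
 assert (0 <= rsum n f) by (apply rsum_nonneg; intros; apply H; lia).
 assert (0 <= f n) by (apply H; lia).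
 destruct (Nat.eq_dec k n). subst; lra. apply IHn; [intros; apply H; lia|lra|lia]. Qed.

Lemma rsum_swap n m f : rsum n (fun i => rsum m (fun j => f i j)) = rsum m (fun j => rsum n (fun i => f i j)).
Proof. induction n; simpl. symmetry; apply rsum_zero. rewrite IHn, <- rsum_plus. reflexivity. Qed.

Lemma rsum_nonzero n f : rsum n f <> 0 -> exists k, (k < n)%nat /\ f k <> 0.
Proof. induction n; simpl; intros H; [lra|]. destruct (Req_dec (f n) 0).
 destruct IHn as [k [Hk Hf]]; [lra|]. exists k; split; auto; lia. exists n; split; auto; lia. Qed.

Lemma vpath_last K V l : forall i j, l <> nil -> (i < K)%nat -> vpath K V i l j -> exists i', (i' < K)%nat /\ 0 < V i' j.
Proof. induction l as [|h t IH]; intros i j Hl Hi Hp. congruence.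
 simpl in Hp. destruct Hp as [Hh [Hv Hp]]. destruct t. simpl in Hp. subst. exists i; auto.
 apply (IH h j); auto; discriminate. Qed.

Lemma ln_le' a b : 0 < a -> a <= b -> ln a <= ln b.
Proof. intros Ha Hab. destruct Hab. left; apply ln_increasing; auto. subst; lra. Qed.

Lemma tangent (phi phiinv : R -> R)
  (Hphiinv : forall t, 0 < t -> phiinv (phi t) = t)
  (HA3 : forall s t theta, 0 < s -> 0 < t -> 0 <= theta <= 1 ->
     ln (phiinv (theta * phi s + (1 - theta) * phi t))
       <= theta * ln (phiinv (phi s)) + (1 - theta) * ln (phiinv (phi t)))
  g L s (Hg : 0 < g) (Hs : 0 < s)
  (Hder : derivable_pt_lim (fun r => ln (phiinv r)) (phi g) L) :
  L * (phi s - phi g) <= ln s - ln g.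
Proof.
  destruct (Req_dec (phi s) (phi g)) as [E|E].
  { assert (s = g) by (rewrite <- (Hphiinv s Hs), <- (Hphiinv g Hg), E; reflexivity). subst. lra. }
  apply Rnot_lt_le; intro Hlt.
  set (e := L*(phi s - phi g) - (ln s - ln g)).
  set (d := Rabs (phi s - phi g)).
  assert (Hd : 0 < d) by (apply Rabs_pos_lt; lra).
  assert (He : 0 < e) by (unfold e; lra).
  destruct (Hder (e/d)) as [del Hdel]. apply Rdiv_lt_0_compat; auto.
  set (th := Rmin 1 (del/(2*d))).
  assert (Hdp : 0 < del) by apply (cond_pos del).
  assert (Hth0 : 0 < th) by (unfold th; apply Rmin_pos; [lra| apply Rdiv_lt_0_compat; lra]).
  assert (Hth1 : th <= 1) by (unfold th; apply Rmin_l).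
  assert (Hth2 : th <= del/(2*d)) by (unfold th; apply Rmin_r).
  set (D := th * (phi s - phi g)).
  assert (HD0 : D <> 0) by (unfold D; apply Rmult_integral_contrapositive; split; lra).
  assert (HDa : Rabs D < del).
  { unfold D. rewrite Rabs_mult, Rabs_right by lra. fold d.
    assert (th * d <= del/(2*d) * d) by (apply Rmult_le_compat_r; lra).
    replace (del/(2*d)*d) with (del/2) in H by (field; lra). lra. }
  specialize (Hdel D HD0 HDa).
  specialize (HA3 s g th Hs Hg ltac:(lra)).
  rewrite (Hphiinv s Hs), (Hphiinv g Hg) in HA3.
  replace (th * phi s + (1 - th) * phi g) with (phi g + D) in HA3 by (unfold D; ring).
  rewrite (Hphiinv g Hg) in Hdel.
  set (Q := (ln (phiinv (phi g + D)) - ln g) / D) in Hdel.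
  assert (HQ : Q * D = ln (phiinv (phi g + D)) - ln g) by (unfold Q; field; auto).
  assert (H1 : Q * (phi s - phi g) <= ln s - ln g).
  { assert (th * (Q * (phi s - phi g)) <= th * (ln s - ln g)).
    { replace (th * (Q * (phi s - phi g))) with (Q * D) by (unfold D; ring). lra. }
    apply Rmult_le_reg_l with th; auto. }
  assert (H2 : Rabs ((Q - L) * (phi s - phi g)) < e).
  { rewrite Rabs_mult. fold d. 
    assert (Rabs (Q - L) * d < e / d * d) by (apply Rmult_lt_compat_r; auto).
    replace (e/d*d) with e in H by (field; lra). lra. }
  apply Rabs_def2 in H2. unfold e in H2. lra.
Qed.

Theorem theorem3
  (K N : nat) (HK : (2 <= K)%nat) (HN : (1 <= N)%nat)
  (C : nat -> nat -> R)
  (HC01 : forall n k, (n < N)%nat -> (k < K)%nat -> C n k = 0 \/ C n k = 1)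
  (HCcol : forall k, (k < K)%nat -> exists n, (n < N)%nat /\ C n k = 1)
  (Pmax : nat -> R) (HP : forall n, (n < N)%nat -> 0 < Pmax n)
  (V : nat -> nat -> R)
  (HVnn : forall i j, (i < K)%nat -> (j < K)%nat -> 0 <= V i j)
  (HVdiag : forall k, (k < K)%nat -> V k k = 0)
  (HVirr : irreducible K V)
  (z : nat -> R) (Hz : forall k, (k < K)%nat -> 0 < z k)
  (gamma : nat -> R) (Hgamma : forall k, (k < K)%nat -> 0 < gamma k)
  (* (A2): phi continuously differentiable and strictly increasing on R_{++}, with phi' > 0 *)
  (phi dphi : R -> R)
  (Hphi_der : forall t, 0 < t -> derivable_pt_lim phi t (dphi t))
  (Hdphi_cont : forall t, 0 < t -> continuity_pt dphi t)
  (Hdphi_pos : forall t, 0 < t -> 0 < dphi t)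
  (Hphi_incr : forall s t, 0 < s -> s < t -> phi s < phi t)
  (* phi^{-1} : Q -> R_{++}, Q = phi(R_{++}) *)
  (phiinv : R -> R)
  (Hphiinv : forall t, 0 < t -> phiinv (phi t) = t)
  (* (A3): phi^{-1} log-convex on Q *)
  (HA3 : forall s t theta, 0 < s -> 0 < t -> 0 <= theta <= 1 ->
     ln (phiinv (theta * phi s + (1 - theta) * phi t))
       <= theta * ln (phiinv (phi s)) + (1 - theta) * ln (phiinv (phi t)))
  (q : nat -> R) (Hq : in_boundaryF K N C Pmax V z gamma phi q)
  (* dinv k = (phi^{-1})'(q_k) *)
  (dinv : nat -> R)
  (Hdinv : forall k, (k < K)%nat -> derivable_pt_lim phiinv (q k) (dinv k))
  (* lam n = lambda_n(q) = rho(G(q) B^(n)) *)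
  (lam : nat -> R)
  (Hlam : forall n, (n < N)%nat -> is_spectral_radius K (GB phiinv q gamma V z C Pmax n) (lam n))
  (n0 : nat) (Hn0 : (n0 < N)%nat)
  (Hn0max : forall n, (n < N)%nat -> lam n <= lam n0)
  (y x : nat -> R)
  (Hy : forall k, (k < K)%nat -> 0 < y k)
  (Hx : forall k, (k < K)%nat -> 0 < x k)
  (Hyeig : forall j, (j < K)%nat ->
     rsum K (fun i => y i * GB phiinv q gamma V z C Pmax n0 i j) = lam n0 * y j)
  (Hxeig : forall i, (i < K)%nat ->
     rsum K (fun j => GB phiinv q gamma V z C Pmax n0 i j * x j) = lam n0 * x i)
  (c : R) (Hc : 0 < c)
  (w : nat -> R)
  (Hw : forall k, (k < K)%nat -> w k = c * ((dinv k / phiinv (q k)) * y k * x k))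
  (pstar : nat -> R)
  (Hpstar : in_Pplus K N C Pmax pstar)
  (Hmax : forall p, in_Pplus K N C Pmax p -> Futil K V z gamma phi p w <= Futil K V z gamma phi pstar w) :
  forall k, (k < K)%nat -> phi (SIR K V z pstar k / gamma k) = q k.
Proof.
  intros k0 Hk0.
  set (M := GB phiinv q gamma V z C Pmax n0).
  assert (HGB : forall n k p, rsum K (fun j => GB phiinv q gamma V z C Pmax n k j * p j) =
     phiinv (q k) * (gamma k * (rsum K (fun j => V k j * p j) + z k * rsum K (fun j => C n j * p j) / Pmax n))).
  { intros n k p.
    transitivity (rsum K (fun j => (phiinv (q k) * gamma k) * (V k j * p j) + (phiinv (q k) * gamma k * z k / Pmax n) * (C n j * p j))).
    apply rsum_ext; intros; unfold GB; unfold Rdiv; ring.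
    rewrite rsum_plus, !rsum_scal. unfold Rdiv; ring. }
  assert (HVp : forall p k, (forall j, (j < K)%nat -> 0 < p j) -> (k < K)%nat -> 0 <= rsum K (fun j => V k j * p j)).
  { intros p k Hp Hk. apply rsum_nonneg. intros j Hj. apply Rmult_le_pos; [apply HVnn; auto| left; auto]. }
  assert (HCp : forall p n, (forall j, (j < K)%nat -> 0 < p j) -> (n < N)%nat -> 0 <= rsum K (fun j => C n j * p j)).
  { intros p n Hp Hn. apply rsum_nonneg. intros j Hj. destruct (HC01 n j Hn Hj) as [E|E]; rewrite E;
    [lra| rewrite Rmult_1_l; left; auto]. }
  assert (HSIR : forall p k, (forall j, (j < K)%nat -> 0 < p j) -> (k < K)%nat -> 0 < SIR K V z p k / gamma k).
  { intros p k Hp Hk. unfold SIR. apply Rdiv_lt_0_compat; [|auto].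
    apply Rdiv_lt_0_compat; auto. specialize (HVp p k Hp Hk). specialize (Hz k Hk). lra. }
  destruct Hq as [pq [Hpq [Hqpq [ns [Hns Hnseq]]]]].
  set (g := fun k => phiinv (q k)).
  assert (Hg_eq : forall k, (k < K)%nat -> g k = SIR K V z pq k / gamma k).
  { intros k Hk. unfold g. rewrite Hqpq by auto. apply Hphiinv. apply HSIR; auto. apply Hpq. }
  assert (Hgpos : forall k, (k < K)%nat -> 0 < g k).
  { intros k Hk. rewrite Hg_eq by auto. apply HSIR; auto. apply Hpq. }
  assert (Hphig : forall k, (k < K)%nat -> phi (g k) = q k).
  { intros k Hk. rewrite Hg_eq by auto. symmetry; auto. }
  assert (Hlam1 : 1 <= lam n0).
  { apply Rle_trans with (lam ns); [|apply Hn0max; auto].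
    destruct (Hlam ns Hns) as [_ Hb]. rewrite <- sqrt_1.
    replace 1 with (1*1+0*0) at 1 by ring. apply Hb.
    exists pq, (fun _ => 0). split.
    - exists 0%nat. split; [lia|]. left. assert (0 < pq 0%nat) by (apply Hpq; lia). lra.
    - intros i Hi. split.
      + rewrite HGB. rewrite Hnseq. fold (g i). rewrite Hg_eq by auto. unfold SIR.
        assert (0 < rsum K (fun j => V i j * pq j) + z i) by (specialize (HVp pq i (proj1 Hpq) Hi); specialize (Hz i Hi); lra).
        specialize (HP ns Hns). specialize (Hgamma i Hi). field. lra.
      + rewrite (rsum_ext _ _ (fun _ => 0)) by (intros; ring). rewrite rsum_zero. ring. }
  destruct Hpstar as [Hpp Hpc] eqn:Hpstar'.
  set (lm := lam n0).
  assert (Hlm : 0 < lm) by (unfold lm; lra).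
  set (t := fun k => SIR K V z pstar k / gamma k).
  assert (Htpos : forall k, (k < K)%nat -> 0 < t k) by (intros; apply HSIR; auto).
  set (S := rsum K (fun k => y k * x k * (ln (t k) - ln (g k)))).
  assert (HS : 0 <= S).
  { assert (H1 := Hmax pq Hpq). unfold Futil in H1.
    rewrite (rsum_ext _ _ (fun k => w k * q k)) in H1 by (intros k Hk; rewrite <- Hqpq; auto).
    assert (H2 : 0 <= rsum K (fun k => w k * (phi (t k) - q k))).
    { rewrite (rsum_ext _ _ (fun k => w k * phi (t k) - w k * q k)) by (intros; ring).
      rewrite rsum_minus. unfold t. lra. }
    assert (H3 : rsum K (fun k => w k * (phi (t k) - q k)) <= rsum K (fun k => c * (y k * x k * (ln (t k) - ln (g k))))).
    { apply rsum_le. intros k Hk. rewrite Hw by auto.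
      assert (Hd : derivable_pt_lim (fun r => ln (phiinv r)) (phi (g k)) (dinv k / g k)).
      { rewrite Hphig by auto.
        replace (dinv k / g k) with (/ phiinv (q k) * dinv k) by (unfold g, Rdiv; ring).
        apply (derivable_pt_lim_comp phiinv ln). apply Hdinv; auto. apply derivable_pt_lim_ln. apply Hgpos; auto. }
      assert (Ht := tangent phi phiinv Hphiinv HA3 (g k) _ (t k) (Hgpos k Hk) (Htpos k Hk) Hd).
      rewrite Hphig in Ht by auto.
      assert (0 < c * y k * x k) by (apply Rmult_lt_0_compat; [apply Rmult_lt_0_compat|]; auto).
      assert (c * y k * x k * (dinv k / g k * (phi (t k) - q k)) <= c * y k * x k * (ln (t k) - ln (g k))) by (apply Rmult_le_compat_l; lra).
      unfold g in *. lra. }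
    rewrite rsum_scal in H3. fold S in H3.
    destruct (Rle_or_lt 0 S); auto. assert (c * S < 0) by (apply Rmult_pos_neg; auto). lra. }
  set (v := fun k => ln (pstar k / x k)).
  assert (Hpv : forall k, (k < K)%nat -> pstar k = x k * exp (v k)).
  { intros k Hk. unfold v. rewrite exp_ln. field. specialize (Hx k Hk); lra.
    apply Rdiv_lt_0_compat; auto. }
  set (m := fun k => rsum K (fun j => M k j * x j * v j) / (lm * x k)).
  assert (HMnn : forall k j, (k < K)%nat -> (j < K)%nat -> 0 <= M k j).
  { intros k j Hk Hj. unfold M, GB. fold (g k). apply Rmult_le_pos; [left; auto|].
    apply Rmult_le_pos; [left; auto|]. apply Rplus_le_le_0_compat; [apply HVnn; auto|].
    unfold Rdiv. apply Rmult_le_pos; [apply Rmult_le_pos|]. left; auto.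
    destruct (HC01 n0 j Hn0 Hj) as [E|E]; rewrite E; lra.
    left; apply Rinv_0_lt_compat; auto. }
  assert (Hexp : forall a b, exp b * (1 + (a - b)) <= exp a).
  { intros a b. replace (exp a) with (exp b * exp (a - b)) by (rewrite <- exp_plus; f_equal; ring).
    apply Rmult_le_compat_l. left; apply exp_pos. apply exp_ineq1_le. }
  assert (Hexps : forall a b, exp b * (1 + (a - b)) = exp a -> a = b).
  { intros a b E. destruct (Req_dec (a - b) 0). lra.
    replace (exp a) with (exp b * exp (a - b)) in E by (rewrite <- exp_plus; f_equal; ring).
    assert (H1 := exp_ineq1 _ H). assert (H2 := exp_pos b).
    apply Rmult_eq_reg_l in E; lra. }
  assert (HF5 : forall k, (k < K)%nat ->
     rsum K (fun j => M k j * pstar j) - lm * x k * exp (m k) =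
     rsum K (fun j => M k j * x j * (exp (v j) - exp (m k) * (1 + (v j - m k))))).
  { intros k Hk.
    rewrite (rsum_ext _ (fun j => M k j * x j * (exp (v j) - exp (m k) * (1 + (v j - m k))))
       (fun j => M k j * pstar j + ((- exp (m k) * (1 - m k)) * (M k j * x j) + (- exp (m k)) * (M k j * x j * v j)))).
    2:{ intros j Hj. rewrite Hpv by auto. ring. }
    rewrite !rsum_plus, !rsum_scal. rewrite Hxeig by auto. fold lm.
    assert (Hmk : rsum K (fun j => M k j * x j * v j) = m k * (lm * x k)).
    { unfold m. field. specialize (Hx k Hk). lra. }
    rewrite Hmk. ring. }
  assert (HF6 : rsum K (fun k => y k * x k * (v k - m k)) = 0).
  { rewrite (rsum_ext _ _ (fun k => y k * x k * v k - / lm * rsum K (fun j => y k * (M k j * x j * v j)))).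
    2:{ intros k Hk. unfold m. rewrite rsum_scal. field. specialize (Hx k Hk). lra. }
    rewrite rsum_minus, rsum_scal, rsum_swap.
    rewrite (rsum_ext _ (fun j => rsum K (fun i => y i * (M i j * x j * v j))) (fun j => lm * (y j * x j * v j))).
    rewrite rsum_scal. field. lra.
    intros j Hj. rewrite (rsum_ext _ _ (fun i => (x j * v j) * (y i * M i j))) by (intros; ring).
    rewrite rsum_scal. unfold M. rewrite Hyeig by auto. fold lm. ring. }
  assert (Hkey : forall k, (k < K)%nat ->
     ln (t k) - ln (g k) <= v k - m k - ln lm /\
     (ln (t k) - ln (g k) = v k - m k - ln lm ->
        rsum K (fun j => C n0 j * pstar j) = Pmax n0 /\
        forall j, (j < K)%nat -> 0 < M k j -> v j = m k)).
  { intros k Hk.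
    set (R1 := rsum K (fun j => M k j * pstar j)).
    set (R0 := lm * x k * exp (m k)).
    assert (HR0 : 0 < R0) by (unfold R0; apply Rmult_lt_0_compat; [apply Rmult_lt_0_compat|apply exp_pos]; auto).
    assert (Hdiff : 0 <= R1 - R0).
    { unfold R1, R0. rewrite HF5 by auto. apply rsum_nonneg. intros j Hj.
      apply Rmult_le_pos. apply Rmult_le_pos; [apply HMnn; auto| left; auto].
      specialize (Hexp (v j) (m k)). lra. }
    assert (HR1 : 0 < R1) by lra.
    set (Vp := rsum K (fun j => V k j * pstar j)).
    set (cp := rsum K (fun j => C n0 j * pstar j)).
    assert (HVp0 : 0 <= Vp) by (apply HVp; auto).
    assert (Hcp : cp <= Pmax n0) by (apply Hpc; auto).
    assert (Hcp0 : 0 <= cp) by (apply HCp; auto).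
    assert (HR1e : R1 = g k * (gamma k * (Vp + z k * cp / Pmax n0))) by (unfold R1, M; rewrite HGB; reflexivity).
    assert (Hgk := Hgpos k Hk). assert (Hgam := Hgamma k Hk). assert (Hzk := Hz k Hk). assert (HPn := HP n0 Hn0).
    assert (Hpk := Hpp k Hk). assert (Hxk := Hx k Hk).
    assert (Htg : t k / g k = pstar k * / (g k * gamma k * (Vp + z k))).
    { unfold t, SIR. fold Vp. field. split; lra. }
    assert (Hden1 : 0 < g k * gamma k * (Vp + z k * cp / Pmax n0)) by (rewrite HR1e in HR1; lra).
    assert (Hden_le : g k * gamma k * (Vp + z k * cp / Pmax n0) <= g k * gamma k * (Vp + z k)).
    { apply Rmult_le_compat_l. apply Rmult_le_pos; lra.
      assert (z k * cp / Pmax n0 <= z k).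
      { unfold Rdiv. rewrite Rmult_assoc. replace (z k) with (z k * 1) at 2 by ring.
        apply Rmult_le_compat_l; [lra|]. apply Rmult_le_reg_r with (Pmax n0); auto.
        rewrite Rmult_assoc, Rinv_l by lra. lra. }
      lra. }
    assert (HC1 : t k / g k <= pstar k / R1).
    { rewrite Htg, HR1e. unfold Rdiv. apply Rmult_le_compat_l; [lra|].
      replace (g k * (gamma k * (Vp + z k * cp * / Pmax n0))) with (g k * gamma k * (Vp + z k * cp / Pmax n0)) by (unfold Rdiv; ring).
      apply Rinv_le_contravar; auto. }
    assert (HC2 : pstar k / R1 <= pstar k / R0).
    { unfold Rdiv. apply Rmult_le_compat_l; [lra|]. apply Rinv_le_contravar; auto; lra. }
    assert (Htgp : 0 < t k / g k) by (apply Rdiv_lt_0_compat; auto).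
    assert (HlnA : ln (t k / g k) = ln (t k) - ln (g k)).
    { unfold Rdiv. rewrite ln_mult; [rewrite ln_Rinv; [ring|auto]|auto|apply Rinv_0_lt_compat; auto]. }
    assert (HlnE : ln (pstar k / R0) = v k - m k - ln lm).
    { replace (pstar k / R0) with (exp (v k - m k) * / lm).
      rewrite ln_mult; [rewrite ln_Rinv, ln_exp; [ring|auto]|apply exp_pos|apply Rinv_0_lt_compat; auto].
      unfold R0. rewrite Hpv by auto. unfold Rminus. rewrite exp_plus, exp_Ropp. field.
      split; [apply exp_neq_0| lra]. }
    split.
    - rewrite <- HlnA, <- HlnE. apply ln_le'; auto. lra.
    - intro Heq. rewrite <- HlnA, <- HlnE in Heq. apply ln_inv in Heq; auto.
      2: apply Rdiv_lt_0_compat; auto.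
      assert (E1 : t k / g k = pstar k / R1) by lra.
      assert (E2 : pstar k / R1 = pstar k / R0) by lra.
      split.
      + rewrite Htg, HR1e in E1. unfold Rdiv in E1.
        assert (Ei : / (g k * gamma k * (Vp + z k)) = / (g k * (gamma k * (Vp + z k * cp * / Pmax n0)))).
        { apply Rmult_eq_reg_l with (pstar k); lra. }
        assert (Ej : g k * gamma k * (Vp + z k) = g k * (gamma k * (Vp + z k * cp * / Pmax n0))).
        { rewrite <- (Rinv_inv (g k * gamma k * (Vp + z k))), Ei, Rinv_inv. reflexivity. }
        assert (Ek : z k = z k * cp * / Pmax n0).
        { assert (0 < g k * gamma k) by (apply Rmult_lt_0_compat; auto).
          apply Rmult_eq_reg_l with (g k * gamma k); [|lra].
          apply Rplus_eq_reg_l with (g k * gamma k * Vp). rewrite <- !Rmult_plus_distr_l. rewrite Ej. ring. }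
        fold cp. assert (Em : z k * Pmax n0 = z k * cp) by (rewrite Ek at 1; field; lra).
        apply Rmult_eq_reg_l in Em; lra.
      + assert (ER : R1 = R0).
        { unfold Rdiv in E2. assert (/ R1 = / R0) by (apply Rmult_eq_reg_l with (pstar k); lra).
          rewrite <- (Rinv_inv R1), H, Rinv_inv. reflexivity. }
        assert (Hz0 : rsum K (fun j => M k j * x j * (exp (v j) - exp (m k) * (1 + (v j - m k)))) <= 0).
        { unfold R1, R0 in ER. rewrite <- HF5 by auto. lra. }
        intros j Hj HMj.
        assert (Hnn : forall j, (j < K)%nat -> 0 <= M k j * x j * (exp (v j) - exp (m k) * (1 + (v j - m k)))).
        { intros j' Hj'. apply Rmult_le_pos. apply Rmult_le_pos; [apply HMnn; auto| left; auto].
          specialize (Hexp (v j') (m k)). lra. }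
        assert (H0 := rsum_zero_nonneg _ _ Hnn Hz0 j Hj).
        apply Rmult_integral in H0. destruct H0 as [H0|H0].
        * apply Rmult_integral in H0. destruct H0 as [H0|H0]; [lra|]. specialize (Hx j Hj); lra.
        * apply Hexps. lra. }
  assert (Hlnl : 0 <= ln lm) by (assert (HH := ln_le' 1 lm ltac:(lra) ltac:(unfold lm; lra)); rewrite ln_1 in HH; exact HH).
  assert (Hyx : forall k, (k < K)%nat -> 0 < y k * x k) by (intros; apply Rmult_lt_0_compat; auto).
  assert (Hsyx : 0 < rsum K (fun k => y k * x k)) by (apply rsum_pos; [lia|auto]).
  set (D := fun k => (v k - m k - ln lm) - (ln (t k) - ln (g k))).
  assert (HDsum : rsum K (fun k => y k * x k * D k) = - ln lm * rsum K (fun k => y k * x k) - S).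
  { unfold D, S. rewrite (rsum_ext _ _ (fun k => (y k * x k * (v k - m k) + (- ln lm) * (y k * x k)) - y k * x k * (ln (t k) - ln (g k)))) by (intros; ring).
    rewrite rsum_minus, rsum_plus, rsum_scal, HF6. ring. }
  assert (HDnn : forall k, (k < K)%nat -> 0 <= y k * x k * D k).
  { intros k Hk. apply Rmult_le_pos; [left; auto|]. unfold D. destruct (Hkey k Hk). lra. }
  assert (HD0 : forall k, (k < K)%nat -> y k * x k * D k = 0).
  { apply rsum_zero_nonneg; auto. rewrite HDsum. nra. }
  assert (HDk : forall k, (k < K)%nat -> ln (t k) - ln (g k) = v k - m k - ln lm).
  { intros k Hk. specialize (HD0 k Hk). apply Rmult_integral in HD0. destruct HD0 as [H|H].
    specialize (Hyx k Hk); lra. unfold D in H; lra. }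
  assert (Hl0 : ln lm = 0).
  { assert (HS2 : rsum K (fun k => y k * x k * D k) = 0).
    { rewrite (rsum_ext _ _ (fun _ => 0)) by (intros; apply HD0; auto). apply rsum_zero. }
    rewrite HDsum in HS2. nra. }
  destruct (proj2 (Hkey 0%nat ltac:(lia)) (HDk 0%nat ltac:(lia))) as [Hcp _].
  destruct (rsum_nonzero K (fun j => C n0 j * pstar j)) as [j0 [Hj0 Hj0']].
  { rewrite Hcp. specialize (HP n0 Hn0). lra. }
  assert (HCj0 : C n0 j0 = 1).
  { destruct (HC01 n0 j0 Hn0 Hj0) as [E|E]; auto. rewrite E in Hj0'. lra. }
  assert (HMpos : forall k j, (k < K)%nat -> (j < K)%nat -> 0 < V k j \/ C n0 j = 1 -> 0 < M k j).
  { intros k j Hk Hj Hor. unfold M, GB. fold (g k). apply Rmult_lt_0_compat; [auto|].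
    apply Rmult_lt_0_compat; [auto|].
    assert (0 <= V k j) by (apply HVnn; auto).
    assert (Hzc : 0 <= z k * C n0 j / Pmax n0).
    { unfold Rdiv. apply Rmult_le_pos; [apply Rmult_le_pos|]. left; auto.
      destruct (HC01 n0 j Hn0 Hj) as [E|E]; rewrite E; lra. left; apply Rinv_0_lt_compat; auto. }
    destruct Hor as [Hor|Hor]. lra. rewrite Hor. 
    assert (0 < z k * 1 / Pmax n0) by (apply Rdiv_lt_0_compat; [rewrite Rmult_1_r|]; auto). lra. }
  assert (Hmk : forall k, (k < K)%nat -> m k = v j0).
  { intros k Hk. symmetry. apply (proj2 (proj2 (Hkey k Hk) (HDk k Hk))); auto. }
  assert (Hvj : forall j, (j < K)%nat -> v j = v j0).
  { intros j Hj. set (i := if Nat.eq_dec j 0 then 1%nat else 0%nat).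
    assert (Hi : (i < K)%nat) by (unfold i; destruct (Nat.eq_dec j 0); lia).
    assert (Hij : i <> j) by (unfold i; destruct (Nat.eq_dec j 0); lia).
    destruct (HVirr i j Hi Hj Hij) as [l [Hl Hp]].
    destruct (vpath_last K V l i j Hl Hi Hp) as [i' [Hi' HV']].
    rewrite <- (Hmk i' Hi'). apply (proj2 (proj2 (Hkey i' Hi') (HDk i' Hi'))); auto. }
  assert (Htk : ln (t k0) = ln (g k0)).
  { specialize (HDk k0 Hk0). rewrite Hmk, Hvj, Hl0 in HDk by auto. lra. }
  apply ln_inv in Htk; auto.
  change (phi (t k0) = q k0). rewrite Htk. auto.
Qed.
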